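(* Let $p>3$ be a prime, $q$ a power of $p$, and $n\ge 0$ an integer with $3\mid n$. If $F_n(1,x)$ is a permutation polynomial of $\mathbb{F}_q$, then $\gcd(n,q^2-1)=3$.
   Context: For an integer $n\ge 1$, the $n$-th reversed Dickson polynomial of the third kind is $F_n(a,x)=\sum_{i=0}^{\lfloor n/2\rfloor}\frac{n-2i}{n-i}\binom{n-i}{i}(-x)^i a^{n-2i}$, where each coefficient $\frac{n-2i}{n-i}\binom{n-i}{i}$ is an integer (read in $\mathbb{F}_q$), and $F_0(a,x)=0$. A polynomial $f\in\mathbb{F}_q[x]$ is a permutation polynomial of $\mathbb{F}_q$ if $c\mapsto f(c)$ is a bijection of $\mathbb{F}_q$. *)

(* Defs.v *)
From HB Require Import structures.
From mathcomp Require Import all_boot all_order all_algebra all_field.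
Set Implicit Arguments. Unset Strict Implicit. Unset Printing Implicit Defensive.
Import GRing.Theory.
Local Open Scope ring_scope.

(* The integer coefficient (n-2i)/(n-i) * C(n-i, i) of the n-th reversed
   Dickson polynomial of the third kind (an exact division for n >= 1,
   0 <= i <= n/2). *)
Definition rdickson3_coef (n i : nat) : nat :=
  (((n - 2 * i) * 'C(n - i, i)) %/ (n - i))%N.

Definition rdickson3 (R : nzRingType) (n : nat) (a : R) : {poly R} :=
  if n == 0%N then 0 else
  \sum_(i < n./2.+1)
     ((rdickson3_coef n i)%:R * (-1) ^+ i * a ^+ (n - 2 * i)) *: 'X^i.

Definition is_permpoly (F : finFieldType) (f : {poly F}) : Prop :=
  bijective (fun c : F => f.[c]).

(* Main.v *)
Require Import Defs.
From HB Require Import structures.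
From mathcomp Require Import all_boot all_order all_algebra all_field.
Import GRing.Theory.
From mathcomp Require Import cyclic.
From mathcomp Require Import zify ring.
Set Implicit Arguments. Unset Strict Implicit. Unset Printing Implicit Defensive.
Import GRing.Theory.
Local Open Scope nat_scope.
Lemma arith n q : odd q -> ~~ (3 %| q) -> (3 %| n) -> 0 < n ->
  gcdn n (q - 1) < 4 -> gcdn n q.+1 < 4 -> gcdn n (q ^ 2 - 1) = 3.
Proof.
move=> oq q3 n3 n0 h1 h2.
have q0 : 0 < q by rewrite lt0n; apply/negP => /eqP q0; rewrite q0 in oq.
have -> : q ^ 2 - 1 = q.+1 * (q - 1).
  by move: q0; clear; nia.
have g1 : 0 < gcdn n (q - 1) by rewrite gcdn_gt0 n0.
have g2 : 0 < gcdn n q.+1 by rewrite gcdn_gt0 n0.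
have e1 : 2 %| n -> 2 %| gcdn n (q - 1).
  move=> h; rewrite dvdn_gcd h /=; move: oq q0; clear; lia.
have e2 : 2 %| n -> 2 %| gcdn n q.+1.
  move=> h; rewrite dvdn_gcd h /=; move: oq; clear; lia.
have o1 : 2 %| gcdn n (q - 1) -> 2 %| n by move=> h; apply: dvdn_trans h (dvdn_gcdl _ _).
have o2 : 2 %| gcdn n q.+1 -> 2 %| n by move=> h; apply: dvdn_trans h (dvdn_gcdl _ _).
have t1 : 3 %| gcdn n (q - 1) -> 3 %| q - 1 by move=> h; apply: dvdn_trans h (dvdn_gcdr _ _).
have t2 : 3 %| gcdn n q.+1 -> 3 %| q.+1 by move=> h; apply: dvdn_trans h (dvdn_gcdr _ _).
have [A|A] : 3 %| q - 1 \/ 3 %| q.+1 by move: oq q3; clear; lia.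
  have d1 : gcdn n (q - 1) = 3.
    have : 3 %| gcdn n (q - 1) by rewrite dvdn_gcd n3 A.
    by move: g1 h1; clear; lia.
  have nodd : ~~ (2 %| n) by apply/negP => /e1; rewrite d1.
  have d2 : gcdn n q.+1 = 1.
    move: g2 h2 nodd A t2 o2; clear; lia.
  by rewrite Gauss_gcdr // /coprime d2.
have d2 : gcdn n q.+1 = 3.
  have : 3 %| gcdn n q.+1 by rewrite dvdn_gcd n3 A.
  by move: g2 h2; clear; lia.
have nodd : ~~ (2 %| n) by apply/negP => /e2; rewrite d2.
have d1 : gcdn n (q - 1) = 1.
  move: g1 h1 nodd A t1 o1; clear; lia.
by rewrite mulnC Gauss_gcdr // /coprime d1.
Qed.

Local Open Scope ring_scope.

Definition es (R : comNzRingType) (m : nat) (t : R) : R :=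
  \sum_(i < m.+1) ('C(m - i, i))%:R * t ^+ i.

Lemma sum_trunc (R : comNzRingType) (f : nat -> R) (N K : nat) :
  (K <= N)%N -> (forall i, (K <= i)%N -> f i = 0) ->
  \sum_(i < N) f i = \sum_(i < K) f i.
Proof.
move=> KN f0; rewrite -!(big_mkord xpredT) (big_cat_nat (n:=K)) //=.
rewrite [X in _ + X]big1_seq ?addr0 // => i /andP[_].
by rewrite mem_index_iota => /andP[/f0].
Qed.

Lemma es_trunc (R : comNzRingType) (m N : nat) (t : R) : (m./2 < N)%N ->
  \sum_(i < N) ('C(m - i, i))%:R * t ^+ i = es m t.
Proof.
move=> hN; have z : forall i, (m./2.+1 <= i)%N -> ('C(m - i, i))%:R * t ^+ i = 0 :> R.
  by move=> i hi; rewrite bin_small ?mul0r //; lia.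
rewrite /es (sum_trunc (f := fun i => ('C(m - i, i))%:R * t ^+ i) hN z).
by rewrite (sum_trunc (f := fun i => ('C(m - i, i))%:R * t ^+ i) (K:=m./2.+1) (N:=m.+1)) //; lia.
Qed.

Lemma binPascal m i : 'C(m.+1 - i, i.+1) = ('C(m - i, i.+1) + 'C(m - i, i))%N.
Proof.
case: (leqP i m) => h.
  by rewrite subSn // binS.
have -> : (m.+1 - i = 0)%N by lia.
have -> : (m - i = 0)%N by lia.
by rewrite !bin0n; case: i h.
Qed.

Lemma es_rec (R : comNzRingType) m (t : R) : es m.+2 t = es m.+1 t + t * es m t.
Proof.
rewrite {1}/es big_ord_recl /=.
under eq_bigr => i _ do rewrite /bump /= add1n subSS binPascal natrD mulrDl.
rewrite big_split /= addrA.
rewrite -(es_trunc (m:=m.+1) (N:=m.+3)); last lia.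
rewrite -(es_trunc (m:=m) (N:=m.+2)); last lia.
rewrite [in RHS]big_ord_recl mulr_sumr /=.
under [in RHS]eq_bigr => i _ do rewrite /bump /= add1n subSS.
rewrite [X in _ = _ + X](eq_bigr (fun i : 'I_m.+2 => 'C(m - i, i)%:R * t ^+ i.+1)) ?bin0 //.
by move=> i _; rewrite mulrCA -exprS.
Qed.

Lemma es0 (R : comNzRingType) (t : R) : es 0 t = 1.
Proof. by rewrite /es big_ord_recl big_ord0 /= bin0 mulr1 addr0. Qed.

Lemma es1 (R : comNzRingType) (t : R) : es 1 t = 1.
Proof. by rewrite /es !big_ord_recl big_ord0 /= /bump /= bin0 bin0n /= mul0r mulr1 !addr0. Qed.

Lemma es_closed (R : comNzRingType) (y : R) m :
  (y - (1 - y)) * es m (- (y * (1 - y))) = y ^+ m.+1 - (1 - y) ^+ m.+1.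
Proof.
suff : ((y - (1 - y)) * es m (- (y * (1 - y))) = y ^+ m.+1 - (1 - y) ^+ m.+1) /\
       ((y - (1 - y)) * es m.+1 (- (y * (1 - y))) = y ^+ m.+2 - (1 - y) ^+ m.+2) by case.
elim: m => [|m [IH1 IH2]].
  rewrite es0 es1 !mulr1; split => //; ring.
split => //.
rewrite es_rec mulrDr IH2 mulrCA IH1.
rewrite !(exprS y) !(exprS (1 - y)); ring.
Qed.

Lemma es_map (R S : comNzRingType) (f : {rmorphism R -> S}) m t :
  f (es m t) = es m (f t).
Proof.
rewrite /es rmorph_sum; apply: eq_bigr => i _.
by rewrite rmorphM rmorph_nat rmorphXn.
Qed.

Lemma coefE n i : (i < n)%N -> rdickson3_coef n i = 'C(n.-1 - i, i).
Proof.
move=> hi; rewrite /rdickson3_coef.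
have h := mul_bin_down (n - i) i.
have -> : (n - 2 * i = n - i - i)%N by lia.
rewrite -h mulKn; last lia.
by have -> : ((n - i).-1 = n.-1 - i)%N by lia.
Qed.

Lemma eval_rd (R : comNzRingType) n (c : R) : (0 < n)%N ->
  (rdickson3 n (1 : R)).[c] = es n.-1 (- c).
Proof.
move=> n0; rewrite /rdickson3 -if_neg -lt0n n0 horner_sum.
rewrite -(es_trunc (N := n./2.+1)); last lia.
apply: eq_bigr => i _.
rewrite hornerZ hornerXn expr1n mulr1 coefE; last by have := ltn_ord i; lia.
by rewrite [(- c) ^+ _]exprNn mulrA.
Qed.

Lemma es_m3 (R : comNzRingType) m : es m.+3 (-1 : R) = - es m (-1).
Proof. rewrite !es_rec; ring. Qed.

Lemma es_one (R : comNzRingType) k : es (3 * k).+2 (-1 : R) = 0.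
Proof.
elim: k => [|k IH].
  by rewrite es_rec es1 es0; ring.
have -> : ((3 * k.+1).+2 = ((3 * k).+2).+3)%N by lia.
by rewrite es_m3 IH oppr0.
Qed.

Lemma card_pow (F : finFieldType) p : p \in [pchar F] -> #|F| = (p ^ logn p #|F|)%N.
Proof. move=> pc; exact: (card_pprimeChar pc). Qed.

Lemma frobq (F : finFieldType) (L : fieldExtType F) p (u : L) :
  p \in [pchar F] -> (1 + u) ^+ #|F| = 1 + u ^+ #|F|.
Proof.
move=> pc; rewrite (card_pow pc).
have pcL : p \in [pchar L] by rewrite pchar_lalg.
elim: (logn _ _) => [|k IH]; first by rewrite !expn0 !expr1.
by rewrite expnSr !exprM IH -!(pFrobenius_autE pcL) rmorphD rmorph1.
Qed.

Lemma in1P (F : finFieldType) (L : fieldExtType F) (x : L) :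
  x ^+ #|F| = x -> exists c : F, x = c%:A.
Proof.
move=> hx.
have : x \in (1%AS : {subfield L}) by rewrite Fermat's_little_theorem dimv1 expn1 hx.
by case/vlineP => c ->; exists c.
Qed.

Lemma key (F : finFieldType) p n e :
  prime p -> (3 < p)%N -> p \in [pchar F] -> (0 < n)%N -> (e %| n)%N ->
  ((e %| #|F| - 1) || (e %| #|F|.+1))%N -> (4 <= e)%N ->
  exists c : F, c != 1 /\ es n.-1 (- c) = 0.
Proof.
move=> pp p3 pc n0 en eq e4.
have ne2 : ~~ (e %| 2)%N by apply/negP => /dvdn_leq; lia.
have ne3 : ~~ (e %| 3)%N by apply/negP => /dvdn_leq; lia.
have ne0 : (e == 0)%N = false by apply/negbTE; lia.
have e0 : (0 < e)%N by lia.
have nz : ('X^e - 1 : {poly F}) != 0.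
  by rewrite -size_poly_eq0 size_Xn_sub_1 //; lia.
have [L [rs Hrs _]] := FinSplittingFieldFor nz.
have pcL : p \in [pchar L] by rewrite pchar_lalg.
have EQ : ('X^e - 1 : {poly L}) = \prod_(z <- rs) ('X - z%:P).
  apply/eqP; rewrite -eqp_monic ?monic_Xn_sub_1 ?monic_prod_XsubC //.
  by move: Hrs; rewrite rmorphB /= map_polyXn rmorph1.
have q1 : (1 < #|F|)%N by apply: finNzRing_gt1.
have pq : (p %| #|F|)%N.
  rewrite (card_pow pc); apply: dvdn_exp => //.
  case: (posnP (logn p #|F|)) => // h; move: q1; rewrite (card_pow pc) h //.
have pe : ~~ (p %| e)%N.
  apply/negP => pe; case/orP: eq => he.
    have : (p %| #|F| - (#|F| - 1))%N by apply: dvdn_sub => //; apply: dvdn_trans he.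
    have -> : (#|F| - (#|F| - 1) = 1)%N by lia.
    rewrite dvdn1 => /eqP p1; lia.
  have := dvdn_trans pe he; rewrite -addn1 dvdn_addr // dvdn1 => /eqP p1; lia.
have sep : separable_poly ('X^e - 1 : {poly L}).
  by apply: separable_Xn_sub_1; rewrite -(dvdn_pcharf pcL).
have Urs : uniq rs by rewrite -separable_prod_XsubC -EQ.
have Srs : size rs = e.
  have := size_prod_XsubC rs id; rewrite -EQ size_Xn_sub_1; [case | lia]; by [].
have Rrs : all e.-unity_root rs.
  apply/allP => z zr.
  have : root (\prod_(z <- rs) ('X - z%:P)) z by rewrite root_prod_XsubC.
  by rewrite -EQ.
have := has_prim_root e0 Rrs Urs; rewrite Srs leqnn => /(_ isT).
case/hasP => z _ zprim.
have z2 : z ^+ 2 != 1 by rewrite -(prim_order_dvd zprim).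
have z3 : z ^+ 3 != 1 by rewrite -(prim_order_dvd zprim).
have zn : z ^+ n = 1 by apply/eqP; rewrite -(prim_order_dvd zprim).
have ze : z ^+ e = 1 by apply/eqP; rewrite -(prim_order_dvd zprim).
have z0 : z != 0.
  apply/negP => /eqP z0; move: ze; rewrite z0 expr0n.
  rewrite ne0.
  by move/eqP; rewrite eq_sym oner_eq0.
have w0 : 1 + z != 0.
  apply/negP => /eqP w0; move: z2.
  have /eqP -> : z == -1 by rewrite -addr_eq0 addrC w0.
  by rewrite sqrrN expr1n eqxx.
have zq : z ^+ #|F| = z \/ z ^+ #|F| = z^-1.
  case/orP: eq => he.
    left; have h : z ^+ (#|F| - 1) = 1 by apply/eqP; rewrite -(prim_order_dvd zprim).
    by rewrite -{1}(subnK (ltnW q1)) exprD h mul1r expr1.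
  right; have : z ^+ #|F|.+1 = 1 by apply/eqP; rewrite -(prim_order_dvd zprim).
  rewrite exprSr => h.
  by rewrite -[LHS]mulr1 -(divff z0) mulrA h mul1r.
pose x := z / (1 + z) ^+ 2.
have xq : x ^+ #|F| = x.
  rewrite /x exprMn exprVn exprAC (frobq z pc).
  case: zq => ->; first by [].
  by field; rewrite w0 z0.
have [c xc] := in1P xq.
have ex : es n.-1 (- x) = 0.
  pose y := z / (1 + z).
  have hy : y * (1 - y) = x by rewrite /y /x; field.
  have := es_closed y n.-1; rewrite hy prednK //.
  have -> : y ^+ n - (1 - y) ^+ n = 0.
    have -> : 1 - y = (1 + z)^-1 by rewrite /y; field.
    by rewrite /y exprMn zn mul1r subrr.
  move/eqP; rewrite mulf_eq0 => /orP[|/eqP //].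
  have -> : y - (1 - y) = (z - 1) / (1 + z) by rewrite /y; field.
  rewrite mulf_eq0 invr_eq0 (negbTE w0) orbF subr_eq0 => /eqP z1.
  by move: z2; rewrite z1 expr1n eqxx.
exists c; split.
  apply/negP => /eqP c1; move: xc; rewrite c1 scale1r => x1.
  have : z ^+ 3 = 1.
    have h : z = (1 + z) ^+ 2.
      move: x1; rewrite /x => /(congr1 (fun u => u * (1 + z) ^+ 2)).
      by rewrite divfK ?expf_neq0 // mul1r.
    have : z ^+ 3 - 1 = (z - 1) * ((1 + z) ^+ 2 - z) by ring.
    by rewrite -h subrr mulr0 => /eqP; rewrite subr_eq0 => /eqP.
  by move/eqP; rewrite (negbTE z3).
apply/eqP; rewrite -(fmorph_eq0 (in_alg L)) es_map rmorphN /= -xc ex //.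
Qed.

Unset Implicit Arguments.

Theorem theorem3p5 (F : finFieldType) (p n : nat) :
  prime p -> (3 < p)%N -> (p \in [pchar F])%R -> (3 %| n)%N ->
  is_permpoly (rdickson3 n (1 : F)%R) ->
  gcdn n (#|F| ^ 2 - 1) = 3%N.
Proof.
move=> pp p3 pc n3 PP.
have inj := bij_inj PP.
have n0 : (0 < n)%N.
  rewrite lt0n; apply/negP => /eqP n0.
  have := inj 0 1; rewrite n0 /rdickson3 eqxx !horner0 => /(_ erefl) /eqP.
  by rewrite eq_sym oner_eq0.
have g1 : es n.-1 (-1 : F) = 0.
  case/dvdnP: n3 => k nk.
  have -> : n.-1 = (3 * k.-1).+2 by move: n0; rewrite nk; clear; lia.
  exact: es_one.
have bound : forall e, (e %| n)%N -> ((e %| #|F| - 1) || (e %| #|F|.+1))%N -> (e < 4)%N.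
  move=> e en eq; rewrite ltnNge; apply/negP => e4.
  have [c [c1 hc]] := key pp p3 pc n0 en eq e4.
  move/eqP: c1; apply; apply: inj => /=.
  by rewrite !eval_rd // hc g1.
have oq : odd #|F|.
  rewrite (card_pow pc) oddX; case: (even_prime pp) => [p2|->]; last by rewrite orbT.
  by rewrite p2 in p3.
have q3 : ~~ (3 %| #|F|)%N.
  rewrite (card_pow pc) Euclid_dvdX // dvdn_prime2 //.
  by apply/negP => /andP[/eqP p3' _]; rewrite -p3' in p3.
apply: arith => //.
  by apply: bound; rewrite ?dvdn_gcdl ?dvdn_gcdr.
by apply: bound; rewrite ?dvdn_gcdl ?dvdn_gcdr ?orbT.
Qed.
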